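(* Let $A,B\subseteq\Sigma^+$ (not necessarily finite) and $k\ge1$. The term $\langle A,B\rangle$ has a deduction tree of size $k$ if and only if there is a formula $\phi\in\mathrm{LTL}[\mathsf{X},\mathsf{wX},\mathsf{F},\mathsf{G}]$ separating $A$ from $B$ with $\mathrm{size}(\phi)=k$.
   Context: Let $AP$ be a finite set of atomic propositions and $\Sigma=2^{AP}$. Formulae of $\mathrm{LTL}[\mathsf{X},\mathsf{wX},\mathsf{F},\mathsf{G}]$ are generated by $\phi::=p\mid\neg p\mid\phi\lor\phi\mid\phi\land\phi\mid\mathsf{X}\phi\mid\mathsf{wX}\phi\mid\mathsf{F}\phi\mid\mathsf{G}\phi$ ($p\in AP$), interpreted on $\sigma\in\Sigma^+$ at positions $0\le i<|\sigma|$: literals/Booleans as usual; $\mathsf{X}\phi$: $i+1<|\sigma|$ and $\phi$ at $i+1$; $\mathsf{wX}\phi$: $i+1=|\sigma|$ or $\phi$ at $i+1$; $\mathsf{F}\phi$/$\mathsf{G}\phi$: $\phi$ at some/every $j$ with $i\le j<|\sigma|$. Size: literals 1, unary operators add 1, binary connectives sum sizes plus 1. For $C\subseteq\Sigma^+$, write $C\models\phi$ if $\sigma,0\models\phi$ for all $\sigma\in C$ and $C\perp\phi$ if $\sigma,0\not\models\phi$ for all $\sigma\in C$; $\phi$ separates $A$ from $B$ if $A\models\phi$ and $B\perp\phi$. Notation: for $\sigma=w_0\cdots w_m$ and $j\le m$, $\sigma^{(j)}=w_j\cdots w_m$; $A^{\mathsf X}=\{\sigma^{(1)}:\sigma\in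 A,|\sigma|\ge2\}$; $A^{\mathsf G}=\{\sigma^{(j)}:\sigma\in A, 0\le j<|\sigma|\}$; a future point for $A$ is a map $f:A\to\mathbb N$ with $f(\sigma)<|\sigma|$ for all $\sigma\in A$, and then $A^f=\{\sigma^{(f(\sigma))}:\sigma\in A\}$. Proof system: terms are pairs $\langle A,B\rangle$ with $A,B\subseteq\Sigma^+$; the rules (conclusion from hypotheses) are: Atomic: $\langle A,B\rangle$ with no hypotheses, provided $A\models\alpha$ and $B\perp\alpha$ for some literal $\alpha$; Or: $\langle A_1\uplus A_2,B\rangle$ from $\langle A_1,B\rangle$ and $\langle A_2,B\rangle$ ($\uplus$ = union of disjoint sets); And: $\langle A,B_1\uplus B_2\rangle$ from $\langle A,B_1\rangle$ and $\langle A,B_2\rangle$; Next: $\langle A,B\rangle$ from $\langle A^{\mathsf X},B^{\mathsf X}\rangle$ provided $|A^{\mathsf X}|=|A|$; WeakNext: $\langle A,B\rangle$ from $\langle A^{\mathsf X},B^{\mathsf X}\rangle$ provided $|B^{\mathsf X}|=|B|$; Future: $\langle A,B\rangle$ from $\langle A^f,B^{\mathsf G}\rangle$ for some future point $f$ for $A$; Globally: $\langle A,B\rangle$ from $\langle A^{\mathsf G},B^f\rangle$ for some future point $f$ for $B$. A deduction tree for $\langle A,B\rangle$ is a finite tree of rule applications with root conclusion $\langle A,B\rangle$, in which every hypothesis is the conclusion of a rule application (so all branches end in Atomic); its size is the number of rule applications in it. *)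

(* Defs.v *)
From mathcomp Require Import all_boot.
Set Implicit Arguments. Unset Strict Implicit. Unset Printing Implicit Defensive.

Section LTL.
Variable AP : finType.

(* A letter of Sigma = 2^AP is a set of atomic propositions; a word is a
   sequence of letters (words of Sigma^+ are the nonempty ones). *)
Definition letter := {set AP}.
Definition word := seq letter.
Definition wset := word -> Prop.

Inductive formula : Type :=
| Pos of AP
| Neg of AP
| Or of formula & formula
| And of formula & formula
| Next of formula
| WNext of formula
| Fut of formula
| Glob of formula.

Fixpoint fsize (phi : formula) : nat :=
  match phi with
  | Pos _ | Neg _ => 1
  | Or a b | And a b => fsize a + fsize b + 1
  | Next a | WNext a | Fut a | Glob a => fsize a + 1
  end.

(* sat s i phi : s, i |= phi  (meaningful for i < size s) *)
Fixpoint sat (s : word) (i : nat) (phi : formula) : Prop :=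
  match phi with
  | Pos p => p \in nth set0 s i
  | Neg p => p \notin nth set0 s i
  | Or a b => sat s i a \/ sat s i b
  | And a b => sat s i a /\ sat s i b
  | Next a => i.+1 < size s /\ sat s i.+1 a
  | WNext a => i.+1 = size s \/ sat s i.+1 a
  | Fut a => exists j, i <= j < size s /\ sat s j a
  | Glob a => forall j, i <= j < size s -> sat s j a
  end.

Definition models (C : wset) (phi : formula) : Prop := forall s, C s -> sat s 0 phi.
Definition perp (C : wset) (phi : formula) : Prop := forall s, C s -> ~ sat s 0 phi.
Definition separates (phi : formula) (A B : wset) : Prop := models A phi /\ perp B phi.

Definition is_literal (phi : formula) : Prop :=
  match phi with Pos _ | Neg _ => True | _ => False end.

(* sigma^(j) = drop j sigma *)
Definition setX (A : wset) : wset :=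
  fun t => exists2 s, A s & (1 < size s /\ t = drop 1 s).
Definition setG (A : wset) : wset :=
  fun t => exists2 s, A s & exists2 j, j < size s & t = drop j s.
Definition future_point (A : wset) (f : word -> nat) : Prop :=
  forall s, A s -> f s < size s.
Definition setF (A : wset) (f : word -> nat) : wset :=
  fun t => exists2 s, A s & t = drop (f s) s.

(* deduction A B k : the term <A,B> has a deduction tree of size k
   (k = number of rule applications). *)
Inductive deduction : wset -> wset -> nat -> Prop :=
| R_atomic A B alpha :
    is_literal alpha -> models A alpha -> perp B alpha -> deduction A B 1
| R_or A A1 A2 B n1 n2 :
    (forall s, A s <-> A1 s \/ A2 s) -> (forall s, ~ (A1 s /\ A2 s)) ->
    deduction A1 B n1 -> deduction A2 B n2 -> deduction A B (n1 + n2 + 1)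
| R_and A B B1 B2 n1 n2 :
    (forall s, B s <-> B1 s \/ B2 s) -> (forall s, ~ (B1 s /\ B2 s)) ->
    deduction A B1 n1 -> deduction A B2 n2 -> deduction A B (n1 + n2 + 1)
| R_next A B n :
    (* |A^X| = |A| : no word of A is lost, i.e. all have length >= 2 *)
    (forall s, A s -> 1 < size s) ->
    deduction (setX A) (setX B) n -> deduction A B (n + 1)
| R_wnext A B n :
    (forall s, B s -> 1 < size s) ->
    deduction (setX A) (setX B) n -> deduction A B (n + 1)
| R_future A B f n :
    future_point A f ->
    deduction (setF A f) (setG B) n -> deduction A B (n + 1)
| R_globally A B f n :
    future_point B f ->
    deduction (setG A) (setF B f) n -> deduction A B (n + 1).

End LTL.

(* Main.v *)
Require Import Defs.
From mathcomp Require Import all_boot.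
From mathcomp Require Import zify.
From Stdlib Require Import Classical ClassicalEpsilon.

Section Aux.
Variable AP : finType.

Lemma sat_drop (phi : formula AP) : forall (s : word AP) j i,
  sat (drop j s) i phi <-> sat s (i + j) phi.
Proof.
elim: phi => [p|p|a IHa b IHb|a IHa b IHb|a IHa|a IHa|a IHa|a IHa] s j i /=.
- by rewrite nth_drop addnC.
- by rewrite nth_drop addnC.
- by rewrite IHa IHb.
- by rewrite IHa IHb.
- rewrite IHa size_drop addSn; split=> -[H1 H2]; split=> //; lia.
- rewrite IHa size_drop addSn; split=> -[H1|H2]; (try by right); left; lia.
- split.
  + move=> [j' [Hj' Hs]]; exists (j' + j); split; last by rewrite -IHa.
    rewrite size_drop in Hj'; lia.
  + move=> [j' [Hj' Hs]]; exists (j' - j); split.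
    * rewrite size_drop; lia.
    * rewrite IHa subnK //; lia.
- split.
  + move=> H j' Hj'. have -> : j' = (j' - j) + j by lia.
    apply/IHa/H; rewrite size_drop; lia.
  + move=> H j' Hj'. apply/IHa/H; rewrite size_drop in Hj'; lia.
Qed.

Lemma sat_drop0 (phi : formula AP) s j : sat (drop j s) 0 phi <-> sat s j phi.
Proof. by rewrite sat_drop add0n. Qed.

Lemma sound (A B : wset AP) k : deduction A B k ->
  (forall s, A s -> 0 < size s) ->
  exists phi : formula AP, separates phi A B /\ fsize phi = k.
Proof.
elim=> {A B k}.
- move=> A B alpha Hl HA HB _; exists alpha; split; first by [].
  by case: alpha Hl {HA HB}.
- move=> A A1 A2 B n1 n2 HA Hd _ IH1 _ IH2 Hne.
  have [p1 [[Hp1 Hq1] <-]] := IH1 (fun s h => Hne s (proj2 (HA s) (or_introl h))).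
  have [p2 [[Hp2 Hq2] <-]] := IH2 (fun s h => Hne s (proj2 (HA s) (or_intror h))).
  exists (Or p1 p2); split=> //; split.
  + move=> s /HA [h|h]; [left; exact: Hp1 | right; exact: Hp2].
  + by move=> s hs /= [h|h]; [exact: Hq1 hs h | exact: Hq2 hs h].
- move=> A B B1 B2 n1 n2 HB Hd _ IH1 _ IH2 Hne.
  have [p1 [[Hp1 Hq1] <-]] := IH1 Hne.
  have [p2 [[Hp2 Hq2] <-]] := IH2 Hne.
  exists (And p1 p2); split=> //; split.
  + by move=> s hs; split; [exact: Hp1 | exact: Hp2].
  + by move=> s /HB [h|h] /= [h1 h2]; [exact: Hq1 h h1 | exact: Hq2 h h2].
- move=> A B n Hsz _ IH Hne.
  have [p [[Hp Hq] <-]] : exists phi : formula AP, separates phi (Defs.setX A) (Defs.setX B) /\ fsize phi = n.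
    apply: IH => t [s hs [h1 ->]]; rewrite size_drop; lia.
  exists (Next p); split=> //; split.
  + move=> s hs /=; split; first exact: Hsz.
    apply/sat_drop0/Hp; exists s => //; split=> //; exact: Hsz.
  + move=> s hs /= [h1 h2]; apply: (Hq (drop 1 s)); last exact/sat_drop0.
    by exists s.
- move=> A B n Hsz _ IH Hne.
  have [p [[Hp Hq] <-]] : exists phi : formula AP, separates phi (Defs.setX A) (Defs.setX B) /\ fsize phi = n.
    apply: IH => t [s hs [h1 ->]]; rewrite size_drop; lia.
  exists (WNext p); split=> //; split.
  + move=> s hs /=. have := Hne s hs.
    case: (ltngtP 1 (size s)) => h1 h2.
    * right; apply/sat_drop0/Hp; by exists s.
    * lia.
    * by left.
  + move=> s hs /= [h|h]; first by have := Hsz s hs; lia.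
    apply: (Hq (drop 1 s)); last exact/sat_drop0.
    by exists s => //; split=> //; exact: Hsz.
- move=> A B f n Hf _ IH Hne.
  have [p [[Hp Hq] <-]] : exists phi : formula AP, separates phi (setF A f) (setG B) /\ fsize phi = n.
    apply: IH => t [s hs ->]; rewrite size_drop; have := Hf s hs; lia.
  exists (Fut p); split=> //; split.
  + move=> s hs /=; exists (f s); split; first exact: Hf.
    apply/sat_drop0/Hp; by exists s.
  + move=> s hs /= [j [hj h]]; apply: (Hq (drop j s)); last exact/sat_drop0.
    by exists s => //; exists j.
- move=> A B f n Hf _ IH Hne.
  have [p [[Hp Hq] <-]] : exists phi : formula AP, separates phi (setG A) (setF B f) /\ fsize phi = n.
    apply: IH => t [s hs [j hj ->]]; rewrite size_drop; lia.
  exists (Glob p); split=> //; split.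
  + move=> s hs /= j hj; apply/sat_drop0/Hp; exists s => //; by exists j.
  + move=> s hs /= h; apply: (Hq (drop (f s) s)); first by exists s.
    apply/sat_drop0/h; exact: Hf.
Qed.

Lemma complete (phi : formula AP) : forall (A B : wset AP),
  (forall s, B s -> 0 < size s) ->
  separates phi A B -> deduction A B (fsize phi).
Proof.
elim: phi => [p|p|a IHa b IHb|a IHa b IHb|a IHa|a IHa|a IHa|a IHa] A B Hne [HA HB] /=.
- by apply: (@R_atomic _ A B (Pos p)).
- by apply: (@R_atomic _ A B (Neg p)).
- apply: (@R_or _ A (fun s => A s /\ sat s 0 a) (fun s => A s /\ ~ sat s 0 a)).
  + move=> s; split; last by case=> -[].
    by move=> h; case: (classic (sat s 0 a)) => h'; [left|right].
  + by move=> s [[_ h1] [_ h2]].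
  + apply: IHa => //; split; first by move=> s [].
    by move=> s hs h; apply: (HB s hs); left.
  + apply: IHb => //; split.
    * by move=> s [hs h]; case: (HA s hs).
    * by move=> s hs h; apply: (HB s hs); right.
- apply: (@R_and _ A B (fun s => B s /\ ~ sat s 0 a) (fun s => B s /\ sat s 0 a)).
  + move=> s; split; last by case=> -[].
    by move=> h; case: (classic (sat s 0 a)) => h'; [right|left].
  + by move=> s [[_ h1] [_ h2]].
  + apply: IHa; first by move=> s [/Hne].
    split; first by move=> s /HA [].
    by move=> s [].
  + apply: IHb; first by move=> s [/Hne].
    split; first by move=> s /HA [].
    by move=> s [hs h] h'; apply: (HB s hs).
- apply: R_next; first by move=> s /HA [].
  apply: IHa.
  + move=> t [s hs [h1 ->]]; rewrite size_drop; lia.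
  + split.
    * move=> t [s hs [h1 ->]]; apply/sat_drop0; by case: (HA s hs).
    * move=> t [s hs [h1 ->]] /sat_drop0 h; by apply: (HB s hs).
- have Hsz : forall s, B s -> 1 < size s.
    move=> s hs; have h2 := Hne s hs.
    case: (classic (1 = size s)) => h1.
    + by exfalso; apply: (HB s hs); left.
    + lia.
  apply: R_wnext => //; apply: IHa.
  + move=> t [s hs [h1 ->]]; rewrite size_drop; lia.
  + split.
    * move=> t [s hs [h1 ->]]; apply/sat_drop0; case: (HA s hs) => //; lia.
    * move=> t [s hs [h1 ->]] /sat_drop0 h; apply: (HB s hs); by right.
- pose f := fun s => epsilon (inhabits 0) (fun j => j < size s /\ sat s j a).
  have Hf : forall s, A s -> f s < size s /\ sat s (f s) a.
    move=> s hs; apply: (epsilon_spec (inhabits 0) (fun j => j < size s /\ sat s j a)).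
    by case: (HA s hs) => j [/andP [_ h1] h2]; exists j.
  apply: (@R_future _ A B f); first by move=> s /Hf [].
  apply: IHa.
  + move=> t [s hs [j hj ->]]; rewrite size_drop; lia.
  + split.
    * move=> t [s hs ->]; apply/sat_drop0; by case: (Hf s hs).
    * move=> t [s hs [j hj ->]] /sat_drop0 h; apply: (HB s hs); exists j; by rewrite leq0n.
- pose f := fun s => epsilon (inhabits 0) (fun j => j < size s /\ ~ sat s j a).
  have Hf : forall s, B s -> f s < size s /\ ~ sat s (f s) a.
    move=> s hs; apply: (epsilon_spec (inhabits 0) (fun j => j < size s /\ ~ sat s j a)).
    apply: NNPP => Hn; apply: (HB s hs) => j /andP [_ hj].
    by apply: NNPP => h; apply: Hn; exists j.
  apply: (@R_globally _ A B f); first by move=> s /Hf [].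
  apply: IHa.
  + move=> t [s hs ->]; rewrite size_drop; have := (Hf s hs).1; lia.
  + split.
    * move=> t [s hs [j hj ->]]; apply/sat_drop0; apply: (HA s hs); by rewrite leq0n.
    * move=> t [s hs ->] /sat_drop0 h; by case: (Hf s hs).
Qed.

End Aux.

Theorem theorem3 (AP : finType) (A B : wset AP) (k : nat) :
  (forall s, A s -> 0 < size s) ->
  (forall s, B s -> 0 < size s) ->
  0 < k ->
  deduction A B k <-> exists phi : formula AP, separates phi A B /\ fsize phi = k.
Proof.
move=> HA HB _; split.
- by move=> H; apply: sound.
- by move=> [phi [Hs <-]]; apply: complete.
Qed.
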